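(* Let $f(z)=e^{-z+\lambda}+\xi$ with $\lambda,\xi\in\mathbb{C}$, $\operatorname{Re}\lambda<0$, $\operatorname{Re}\xi\ge1$, and let $g(z)=e^{z+\mu}+\zeta$ with $\mu,\zeta\in\mathbb{C}$, $\operatorname{Re}\mu<0$, $\operatorname{Re}\zeta\le-1$. Then $I(f)\cap I(g)=\emptyset$.
   Context: For an entire function $f$, $f^n$ denotes the $n$-th iterate and $I(f)=\{z\in\mathbb{C}: f^n(z)\to\infty\}$ is its escaping set. *)

(* Defs.v *)
From Stdlib Require Import Reals.
Open Scope R_scope.

Definition Cplx : Type := (R * R)%type.
Definition Re (z : Cplx) : R := fst z.
Definition Im (z : Cplx) : R := snd z.
Definition Cadd (z w : Cplx) : Cplx := (fst z + fst w, snd z + snd w).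
Definition Copp (z : Cplx) : Cplx := (- fst z, - snd z).
Definition Cexp (z : Cplx) : Cplx := (exp (fst z) * cos (snd z), exp (fst z) * sin (snd z)).
Definition Cnorm (z : Cplx) : R := sqrt (fst z * fst z + snd z * snd z).

Definition iterate (f : Cplx -> Cplx) (n : nat) (z : Cplx) : Cplx := Nat.iter n f z.

Definition escaping (f : Cplx -> Cplx) (z : Cplx) : Prop :=
  cv_infty (fun n => Cnorm (iterate f n z)).

(* Main.v *)
Require Import Defs.
From Stdlib Require Import Reals Lra Psatz.
Open Scope R_scope.

Lemma not_esc_bounded (u : nat -> R) (M : R) :
  (forall n, u (S n) <= M) -> ~ cv_infty u.
Proof.
  intros H Hc. destruct (Hc M) as [N HN].
  specialize (HN (S N) ltac:(lia)). specialize (H N). lra.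
Qed.

Lemma exp_lt1 t : t < 0 -> 0 < exp t < 1.
Proof. intros. split. apply exp_pos. rewrite <- exp_0. apply exp_increasing; lra. Qed.

Lemma norm_bound (w : Cplx) (c d : R) :
  c - 1 <= fst w <= c + 1 -> d - 1 <= snd w <= d + 1 ->
  Cnorm w <= sqrt ((Rabs c + 1) * (Rabs c + 1) + (Rabs d + 1) * (Rabs d + 1)).
Proof.
  intros H1 H2. unfold Cnorm. apply sqrt_le_1_alt.
  pose proof (Rle_abs c) as a1. pose proof (Rle_abs (-c)) as a2. rewrite Rabs_Ropp in a2.
  pose proof (Rle_abs d) as b1. pose proof (Rle_abs (-d)) as b2. rewrite Rabs_Ropp in b2.
  assert (A : -(Rabs c + 1) <= fst w <= Rabs c + 1) by lra.
  assert (B : -(Rabs d + 1) <= snd w <= Rabs d + 1) by lra.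
  nra.
Qed.

Theorem corollary1 (lambda xi mu zeta : Cplx) :
  Re lambda < 0 -> 1 <= Re xi -> Re mu < 0 -> Re zeta <= -1 ->
  forall z : Cplx,
    ~ (escaping (fun w => Cadd (Cexp (Cadd (Copp w) lambda)) xi) z /\
       escaping (fun w => Cadd (Cexp (Cadd w mu)) zeta) z).
Proof.
  intros Hl Hx Hm Hz z [Ef Eg].
  unfold Re in *.
  destruct (Rle_or_lt 0 (fst z)) as [Hp|Hn].
  -
    set (f := fun w => Cadd (Cexp (Cadd (Copp w) lambda)) xi) in *.
    assert (step : forall w, 0 <= fst w ->
      fst xi - 1 <= fst (f w) <= fst xi + 1 /\ snd xi - 1 <= snd (f w) <= snd xi + 1).
    { intros w Hw. unfold f, Cadd, Cexp, Copp; simpl.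
      destruct (exp_lt1 (- fst w + fst lambda)) as [e1 e2]; [lra|].
      pose proof (COS_bound (- snd w + snd lambda)).
      pose proof (SIN_bound (- snd w + snd lambda)). split; nra. }
    assert (inv : forall n, 0 <= fst (iterate f n z)).
    { induction n; [exact Hp|]. simpl. change (0 <= fst (f (iterate f n z))).
      destruct (step _ IHn). lra. }
    apply (not_esc_bounded (fun n => Cnorm (iterate f n z)) (sqrt ((Rabs (fst xi) + 1) * (Rabs (fst xi) + 1) + (Rabs (snd xi) + 1) * (Rabs (snd xi) + 1))) ); [|exact Ef].
    intro n. unfold iterate; simpl Nat.iter; fold (iterate f n z).
    destruct (step _ (inv n)). apply norm_bound; assumption.
  - set (g := fun w => Cadd (Cexp (Cadd w mu)) zeta) in *.
    assert (step : forall w, fst w <= 0 ->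
      fst zeta - 1 <= fst (g w) <= fst zeta + 1 /\ snd zeta - 1 <= snd (g w) <= snd zeta + 1).
    { intros w Hw. unfold g, Cadd, Cexp, Copp; simpl.
      destruct (exp_lt1 (fst w + fst mu)) as [e1 e2]; [lra|].
      pose proof (COS_bound (snd w + snd mu)).
      pose proof (SIN_bound (snd w + snd mu)). split; nra. }
    assert (inv : forall n, fst (iterate g n z) <= 0).
    { induction n; [simpl; lra|]. simpl. change (fst (g (iterate g n z)) <= 0).
      destruct (step _ IHn). lra. }
    apply (not_esc_bounded (fun n => Cnorm (iterate g n z)) (sqrt ((Rabs (fst zeta) + 1) * (Rabs (fst zeta) + 1) + (Rabs (snd zeta) + 1) * (Rabs (snd zeta) + 1))) ); [|exact Eg].
    intro n. unfold iterate; simpl Nat.iter; fold (iterate g n z).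
    destruct (step _ (inv n)). apply norm_bound; assumption.
Qed.
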